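(* Let $\eta>0$ and $\theta>0$, and let $(\bar q(t))_{t\in\mathbb Z_+}$ be a sequence in $(0,1)$ such that $$\bar q(t+1)-\bar q(t)\le-\frac{\eta\,\bar q(t)^2}{1-\log(\theta\bar q(t))}\quad\text{for all }t,$$ and $\theta\bar q(0)\le1$. Then for every $T$ with $\eta T/\theta\ge e$, $$\bar q(T)\le\frac{1}{\eta T}\log\Big(\frac{\eta T}{\theta}\Big).$$ *)

(* Defs.v *)
From Stdlib Require Export Reals.
Open Scope R_scope.

(* Main.v *)
Require Import Defs.
From Stdlib Require Import Reals Lra.
Open Scope R_scope.

Lemma ln_le_m1 s : 0 < s -> ln s <= s - 1.
Proof. intro Hs. pose proof (exp_ineq1_le (ln s)). rewrite exp_ln in H; lra. Qed.

Lemma ln_le' a b : 0 < a -> a <= b -> ln a <= ln b.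
Proof. intros Ha [H|H]. left; apply ln_increasing; lra. subst; lra. Qed.

Lemma ln_nonpos x : 0 < x -> x <= 1 -> ln x <= 0.
Proof. intros. rewrite <- ln_1. apply ln_le'; lra. Qed.

Lemma tangent x y : 0 < y -> 0 < x -> x <= 1 ->
  ln y / y <= ln x / x - (1 - ln x) / x^2 * (x - y).
Proof.
  intros Hy Hx Hx1.
  set (s := y / x).
  assert (Hs : 0 < s) by (unfold s; apply Rdiv_lt_0_compat; lra).
  assert (Ey : y = x * s) by (unfold s; field; lra).
  rewrite Ey, ln_mult by lra.
  pose proof (ln_le_m1 s Hs) as Hm. pose proof (ln_nonpos x Hx Hx1) as Hl.
  set (l := ln x) in *. set (m := ln s) in *.
  replace ((l + m) / (x * s)) with (((l+m)/s) / x) by (field; lra).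
  replace (l / x - (1 - l) / x ^ 2 * (x - x * s)) with ((l - (1-l)*(1-s))/x) by (field; lra).
  unfold Rdiv at 1 3. apply Rmult_le_compat_r. left; apply Rinv_0_lt_compat; lra.
  apply (Rmult_le_reg_r s); [lra|].
  replace ((l + m) / s * s) with (l+m) by (field; lra).
  assert (0 <= - l * (1-s)^2) by (apply Rmult_le_pos; [lra| apply pow2_ge_0]).
  nra.
Qed.

Lemma phi_mono a b : 0 < a -> a < b -> b <= 1 -> ln a / a < ln b / b.
Proof.
  intros Ha Hab Hb.
  pose proof (ln_increasing a b Ha Hab). pose proof (ln_nonpos b ltac:(lra) Hb).
  apply Rlt_le_trans with (ln b / a).
  unfold Rdiv; apply Rmult_lt_compat_r; [apply Rinv_0_lt_compat; lra| lra].
  unfold Rdiv. apply Rmult_le_compat_neg_l; [lra|].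
  apply Rinv_le_contravar; lra.
Qed.

Theorem lemma10 (eta theta : R) (q : nat -> R)
  (Heta : 0 < eta) (Htheta : 0 < theta)
  (Hq01 : forall t : nat, 0 < q t < 1)
  (Hrec : forall t : nat,
     q (S t) - q t <= - (eta * (q t)^2 / (1 - ln (theta * q t))))
  (H0 : theta * q 0%nat <= 1) :
  forall T : nat, eta * INR T / theta >= exp 1 ->
    q T <= / (eta * INR T) * ln (eta * INR T / theta).
Proof.
  set (x := fun t => theta * q t).
  assert (Hxpos : forall t, 0 < x t).
  { intro t; unfold x; specialize (Hq01 t); apply Rmult_lt_0_compat; lra. }
  assert (Hstep : forall t, x t <= 1 ->
            x t - x (S t) >= eta / theta * (x t)^2 / (1 - ln (x t))).
  { intros t Ht. pose proof (ln_nonpos _ (Hxpos t) Ht).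
    specialize (Hrec t). unfold x in *.
    assert (0 < 1 - ln (theta * q t)) by lra.
    replace (eta / theta * (theta * q t) ^ 2 / (1 - ln (theta * q t)))
      with (theta * (eta * q t ^ 2 / (1 - ln (theta * q t)))) by (field; lra).
    replace (theta * q t - theta * q (S t)) with (theta * (q t - q (S t))) by ring.
    apply Rle_ge, Rmult_le_compat_l; lra. }
  assert (Hle1 : forall t, x t <= 1).
  { induction t. exact H0.
    pose proof (Hstep t IHt). pose proof (ln_nonpos _ (Hxpos t) IHt).
    assert (0 <= eta / theta * x t ^ 2 / (1 - ln (x t))).
    { apply Rmult_le_pos. apply Rmult_le_pos. left; apply Rdiv_lt_0_compat; lra.
      apply pow2_ge_0. left; apply Rinv_0_lt_compat; lra. }
    lra. }
  assert (Hphi : forall t, ln (x t) / x t <= - (eta / theta) * INR t).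
  { induction t.
    - simpl. pose proof (ln_nonpos _ (Hxpos 0%nat) (Hle1 0%nat)).
      pose proof (Hxpos 0%nat) as H0'.
      replace (- (eta / theta) * 0) with 0 by ring.
      unfold Rdiv. pose proof (Rinv_0_lt_compat _ H0'). nra.
    - rewrite S_INR.
      pose proof (tangent (x t) (x (S t)) (Hxpos (S t)) (Hxpos t) (Hle1 t)).
      pose proof (Hstep t (Hle1 t)). pose proof (ln_nonpos _ (Hxpos t) (Hle1 t)).
      pose proof (Hxpos t).
      assert ((1 - ln (x t)) / x t ^ 2 * (x t - x (S t)) >= eta / theta).
      { apply Rle_ge.
        apply Rle_trans with ((1 - ln (x t)) / x t ^ 2 * (eta / theta * x t ^ 2 / (1 - ln (x t)))).
        right; field; repeat split; lra.
        apply Rmult_le_compat_l; [|lra].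
        left; apply Rdiv_lt_0_compat; [lra| apply pow_lt; lra]. }
      nra. }
  intros T HT.
  set (K := eta * INR T / theta) in *.
  pose proof (exp_ineq1_le 1) as He.
  assert (HK : 0 < K) by lra.
  set (L := ln K).
  assert (HL1 : 1 <= L).
  { unfold L. rewrite <- (ln_exp 1). apply ln_le'; [apply exp_pos| lra]. }
  assert (HLK : L <= K) by (pose proof (ln_le_m1 K HK); unfold L; lra).
  assert (HT0 : 0 < INR T).
  { destruct (Req_dec (INR T) 0) as [E|E]. unfold K in HK; rewrite E in HK.
    unfold Rdiv in HK; rewrite Rmult_0_r, Rmult_0_l in HK; lra.
    pose proof (pos_INR T); lra. }
  assert (Hgoal : x T <= L / K).
  { destruct (Rle_or_lt (x T) (L / K)) as [H|H]; [exact H|exfalso].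
    assert (HLK0 : 0 < L / K) by (apply Rdiv_lt_0_compat; lra).
    assert (Hmono : ln (L / K) / (L / K) < ln (x T) / x T)
      by (apply phi_mono; [lra| lra| apply Hle1]).
    pose proof (Hphi T) as HpT.
    replace (- (eta / theta) * INR T) with (- K) in HpT by (unfold K; field; lra).
    assert (E : ln (L / K) = ln L - L).
    { unfold Rdiv. rewrite ln_mult, ln_Rinv; [unfold L; ring| lra | lra | apply Rinv_0_lt_compat; lra]. }
    rewrite E in Hmono.
    assert (HlnL : 0 <= ln L).
    { rewrite <- ln_1. apply ln_le'; lra. }
    assert (E2 : (ln L - L) / (L / K) = K * (ln L / L) - K) by (field; lra).
    rewrite E2 in Hmono.
    assert (0 <= K * (ln L / L)).
    { apply Rmult_le_pos; [lra|]. unfold Rdiv; apply Rmult_le_pos; [lra|].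
      left; apply Rinv_0_lt_compat; lra. }
    lra. }
  unfold x in Hgoal.
  replace (q T) with ((theta * q T) / theta) by (field; lra).
  replace (/ (eta * INR T) * L) with ((L / K) / theta) by (unfold K; field; lra).
  unfold Rdiv; apply Rmult_le_compat_r; [left; apply Rinv_0_lt_compat; lra| exact Hgoal].
Qed.
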